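(* Let $\mathcal{X}$ be a nonempty subset of $\mathbb{R}^n$ and $\mathbf{F}:\mathcal{X}\to I(\mathbb{R})$ an interval-valued function such that \[\mathbf{F}(x)\ominus_{gH}\mathbf{F}(y)\preceq\mathbf{C}\odot\|x-y\|\quad\text{for all }x,y\in\mathcal{X},\] where $\mathbf{C}=[c,c]$ with $c\in\mathbb{R}$. Then $\|\mathbf{F}(x)\ominus_{gH}\mathbf{F}(y)\|_{I(\mathbb{R})}\le c\|x-y\|$ for all $x,y\in\mathcal{X}$.
   Context: $I(\mathbb{R})$: nonempty compact intervals $\mathbf{A}=[\underline{a},\overline{a}]$; $\lambda\odot\mathbf{A}=[\min\{\lambda\underline{a},\lambda\overline{a}\},\max\{\lambda\underline{a},\lambda\overline{a}\}]$; $\mathbf{A}\ominus_{gH}\mathbf{B}=[\min\{\underline{a}-\underline{b},\overline{a}-\overline{b}\},\max\{\underline{a}-\underline{b},\overline{a}-\overline{b}\}]$; $\mathbf{A}\preceq\mathbf{B}$ iff $\underline{a}\le\underline{b}$ and $\overline{a}\le\overline{b}$; $\|\mathbf{A}\|_{I(\mathbb{R})}=\max\{|\underline{a}|,|\overline{a}|\}$; $\|\cdot\|$ Euclidean norm. *)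

(* Defs.v *)
From HB Require Import structures.
From mathcomp Require Import all_boot all_order all_algebra.
From mathcomp Require Import reals.
Set Implicit Arguments. Unset Strict Implicit. Unset Printing Implicit Defensive.
Import Order.TTheory GRing.Theory Num.Theory.
Local Open Scope ring_scope.

Record Ival (R : realType) := Itv {
  lo : R ; hi : R ; itv_ok : lo <= hi }.
Arguments Itv {R}.

Lemma minr_le_maxr (R : realType) (a b : R) : Order.min a b <= Order.max a b.
Proof. by rewrite ge_min le_max lexx. Qed.

Definition iscale (R : realType) (lam : R) (A : Ival R) : Ival R :=
  Itv (Order.min (lam * lo A) (lam * hi A)) (Order.max (lam * lo A) (lam * hi A))
      (minr_le_maxr _ _).

Definition gHdiff (R : realType) (A B : Ival R) : Ival R :=
  Itv (Order.min (lo A - lo B) (hi A - hi B)) (Order.max (lo A - lo B) (hi A - hi B))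
      (minr_le_maxr _ _).

Definition ile (R : realType) (A B : Ival R) : Prop :=
  lo A <= lo B /\ hi A <= hi B.

Definition inorm (R : realType) (A : Ival R) : R :=
  Order.max `|lo A| `|hi A|.

Definition ipt (R : realType) (c : R) : Ival R := Itv c c (lexx c).

Definition enorm (R : realType) (n : nat) (x : 'rV[R]_n) : R :=
  Num.sqrt (\sum_(i < n) x ord0 i ^+ 2).

(* Main.v *)
Require Import Defs.
From HB Require Import structures.
From mathcomp Require Import all_boot all_order all_algebra.
From mathcomp Require Import reals.
From mathcomp Require Import lra.
Import Order.TTheory GRing.Theory Num.Theory.
Local Open Scope ring_scope.

Lemma enormN (R : realType) (n : nat) (x y : 'rV[R]_n) :
  enorm (y - x) = enorm (x - y).
Proof.
rewrite /enorm; congr Num.sqrt; apply: eq_bigr => i _.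
by rewrite !mxE -sqrrN opprB.
Qed.

Theorem mainTheorem13 (R : realType) (n : nat) (X : 'rV[R]_n -> Prop)
  (F : 'rV[R]_n -> Ival R) (c : R) :
  (exists x0, X x0) ->
  (forall x y, X x -> X y ->
     ile (gHdiff (F x) (F y)) (iscale (enorm (x - y)) (ipt c))) ->
  forall x y, X x -> X y ->
    inorm (gHdiff (F x) (F y)) <= c * enorm (x - y).
Proof.
move=> _ H x y Xx Xy.
have [_ H1] := H x y Xx Xy.
have [_ H2] := H y x Xy Xx.
rewrite enormN in H2.
move: H1 H2; rewrite /inorm /gHdiff /iscale /ipt /=.
set d := enorm (x - y).
have e : d * c = c * d by rewrite mulrC.
rewrite /Order.max /Order.min /= !e !if_same.
set a := lo (F x) - lo (F y). set b := hi (F x) - hi (F y).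
have -> : lo (F y) - lo (F x) = - a by rewrite opprB.
have -> : hi (F y) - hi (F x) = - b by rewrite opprB.
move=> H1 H2.
have [ha hb] : a <= c * d /\ b <= c * d.
  by move: H1; case: ifP => /= h1 h2; [|move/negbT: h1; rewrite -leNgt => h1]; lra.
have [ha' hb'] : - a <= c * d /\ - b <= c * d.
  by move: H2; rewrite !ltrN2; case: ifP => /= h1 h2; [|move/negbT: h1; rewrite -leNgt => h1]; lra.
have Ha : `|a| <= c * d by rewrite ler_norml; apply/andP; split; lra.
have Hb : `|b| <= c * d by rewrite ler_norml; apply/andP; split; lra.
by do 3 (case: ifP => _ //=).
Qed.
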